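(* Let $\mathbf f$ be a face degree sequence, $g\ge0$, and $p\ge j_0\ge1$. Then \[|\mathbf f|\,\beta_g(\mathbf f-\mathbf 1_{j_0})\ge j_0f_{j_0}\,\beta_g(\mathbf f-\mathbf 1_p).\] In particular, if $j_0f_{j_0}\ge\delta|\mathbf f|$ for some $\delta>0$, then $\beta_g(\mathbf f-\mathbf 1_{j_0})\ge\delta\,\beta_g(\mathbf f-\mathbf 1_p)$.
   Context: A face degree sequence is $\mathbf f=(f_j)_{j\ge1}$ of nonnegative integers, eventually zero; $|\mathbf f|=\sum_jjf_j$; $\mathbf 1_j$ is the indicator sequence of $j$. $\beta_g(\mathbf f)$ is the number of rooted bipartite maps of genus $g$ with $f_j$ faces of degree $2j$ for all $j$ (zero if some entry of $\mathbf f$ is negative). *)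

(* Defs.v *)
From HB Require Import structures.
From mathcomp Require Import all_boot all_order all_algebra all_fingroup.
Set Implicit Arguments. Unset Strict Implicit. Unset Printing Implicit Defensive.

(* Face degree sequences f = (f_1, f_2, ...) are represented by finite lists
   [f : seq nat] with  f_j = nth 0 f j.-1  (j >= 1); trailing entries are 0. *)

Open Scope nat_scope.

Definition fsize (f : seq nat) : nat := \sum_(i < size f) i.+1 * nth 0 f i.

Definition fdeg (f : seq nat) (j : nat) : nat := nth 0 f j.-1.

(* f - 1_j as an integer-valued sequence (entries may be negative) *)
Definition fminus1 (f : seq nat) (j : nat) : seq int :=
  [seq ((nth 0 f i)%:Z - (i.+1 == j)%:Z)%R | i <- iota 0 (maxn (size f) j)].

Definition ncycles n (p : {perm 'I_n}) (k : nat) : nat :=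
  #|[set c in porbits p | #|c| == k]|.

(* Labelled bipartite maps with n edges (edges labelled by 'I_n) are pairs
   (s, t) of permutations (black / white vertex rotations) generating a
   transitive group; vertices = cycles of s and of t, faces = cycles of
   s*t, a face of degree 2k being a cycle of length k. *)
Definition has_faces n (s t : {perm 'I_n}) (h : seq nat) : bool :=
  [forall k : 'I_(n + size h).+1,
     (0 < k) ==> (ncycles (s * t)%g k == nth 0 h k.-1)].

Definition genus_is n (s t : {perm 'I_n}) (g : nat) : bool :=
  #|porbits s| + #|porbits t| + #|porbits (s * t)%g| + 2 * g == n + 2.

Definition is_bip_map n (g : nat) (h : seq nat) (st : {perm 'I_n} * {perm 'I_n}) : bool :=
  [&& [transitive <<[set st.1; st.2]>>, on [set: 'I_n] | 'P],
      has_faces st.1 st.2 h & genus_is st.1 st.2 g].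

Definition labelled_count n g (h : seq nat) : nat :=
  #|[set st : {perm 'I_n} * {perm 'I_n} | is_bip_map g h st]|.

(* Rooted bipartite maps of genus g with h_j faces of degree 2j:
   n = |h| edges; rooted count = labelled count / (n-1)!.
   Maps have at least one edge (the vertex map has a face of degree 0). *)
Definition beta_nat (g : nat) (h : seq nat) : nat :=
  let n := fsize h in
  if n == 0 then 0 else labelled_count n g h %/ (n.-1)`!.

Definition beta (g : nat) (h : seq int) : nat :=
  if all (fun x : int => (0 <= x)%R) h then beta_nat g (map absz h) else 0.

(* Main.v *)
Require Import Defs.
From HB Require Import structures.
From mathcomp Require Import all_boot all_order all_algebra all_fingroup.
From mathcomp Require Import zify.
Import Order.TTheory GRing.Theory Num.Theory.
Set Implicit Arguments. Unset Strict Implicit. Unset Printing Implicit Defensive.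
Open Scope nat_scope.

Lemma porbit_transfer (T1 T2 : finType) (q1 : {perm T1}) (q2 : {perm T2})
  (phi : T1 -> T2) x :
  (forall y, y \in porbit q1 x -> q2 (phi y) = phi (q1 y)) ->
  porbit q2 (phi x) = phi @: porbit q1 x.
Proof.
move=> H.
have E i : (q2 ^+ i)%g (phi x) = phi ((q1 ^+ i)%g x).
  elim: i => [|i IH]; first by rewrite !expg0 !perm1.
  by rewrite !expgSr !permM IH H // mem_porbit.
apply/setP=> z; apply/porbitP/imsetP => [[i ->]|[y /porbitP[i ->] ->]].
  by exists ((q1 ^+ i)%g x); rewrite ?mem_porbit ?E.
by exists i; rewrite E.
Qed.

Lemma card_setE (T : finType) (P : pred T) : #|[set x | P x]| = \sum_x P x.
Proof.
rewrite -sum1_card big_mkcond /=; apply: eq_bigr => x _; rewrite inE.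
by case: (P x).
Qed.

Lemma ncyclesE n (q : {perm 'I_n}) m :
  m * ncycles q m = \sum_x (#|porbit q x| == m).
Proof.
rewrite -card_setE /ncycles.
have -> : [set c in porbits q | #|c| == m] =
          porbit q @: [set x | #|porbit q x| == m].
  apply/setP => C; rewrite inE; apply/andP/imsetP.
    by move=> [/imsetP[x _ ->] Hm]; exists x; rewrite ?inE.
  by move=> [x]; rewrite inE => Hm ->; split; [apply: imset_f|].
set A := [set x | _].
rewrite -[#|A|]sum1_card (partition_big_imset (porbit q)) /=.
rewrite mulnC -sum_nat_const; apply: eq_bigr => C /imsetP[y Hy ->].
move: Hy; rewrite inE => /eqP Hy.
rewrite (eq_bigl (mem (porbit q y))) ?sum1_card ?Hy // => i.
rewrite /= eq_porbit_mem; case: (boolP (i \in porbit q y)) => Hi;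
  rewrite ?andbF ?andbT //.
have := Hi; rewrite -eq_porbit_mem => /eqP E.
by rewrite inE E Hy eqxx.
Qed.

Lemma ncycles_big n (q : {perm 'I_n}) m : n < m -> ncycles q m = 0.
Proof.
move=> Hm; apply/eqP; rewrite -(eqn_pmul2l (leq_ltn_trans (leq0n n) Hm)) muln0.
rewrite ncyclesE; apply/eqP; apply: big1 => x _.
have : #|porbit q x| <= n by rewrite -[X in _ <= X]card_ord max_card.
by case: eqP => // ->; rewrite leqNgt Hm.
Qed.

Section Lift.
Variables (n : nat) (q : {perm 'I_n}) (k : 'I_n.+1).
Local Notation qh := (lift_perm k k q).

Lemma porbit_lift x : porbit qh (lift k x) = lift k @: porbit q x.
Proof. by apply: porbit_transfer => y _; rewrite lift_perm_lift. Qed.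

Lemma porbit_lift_k : porbit qh k = [set k].
Proof.
apply/setP => z; rewrite inE; apply/porbitP/eqP => [[i ->]|->].
  by elim: i => [|i IH]; rewrite ?expg0 ?perm1 // expgSr permM IH lift_perm_id.
by exists 0; rewrite expg0 perm1.
Qed.

Lemma k_notin_lift (C : {set 'I_n}) : k \notin lift k @: C.
Proof.
by apply/imsetP => [[x _ /eqP]]; rewrite (negbTE (neq_lift k x)).
Qed.

Lemma porbits_lift : #|porbits qh| = #|porbits q|.+1.
Proof.
have -> : porbits qh = [set k] |: ((fun C : {set 'I_n} => lift k @: C) @: porbits q).
  apply/setP=> C; rewrite !inE; apply/imsetP/orP.
    move=> [y _ ->]; case: (unliftP k y) => [x ->|->].
      by right; rewrite porbit_lift; apply/imsetP; exists (porbit q x);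
        rewrite ?imset_f.
    by left; rewrite porbit_lift_k.
  move=> [/eqP ->|/imsetP[C' /imsetP[x _ ->] ->]].
    by exists k; rewrite ?porbit_lift_k.
  by exists (lift k x); rewrite ?porbit_lift.
rewrite cardsU1 card_imset; last exact: imset_inj lift_inj.
suff -> : [set k] \notin ((fun C : {set 'I_n} => lift k @: C) @: porbits q) by [].
apply/imsetP => [[C _ E]].
by move: (k_notin_lift C); rewrite -E set11.
Qed.
End Lift.
Definition ins n (q : {perm 'I_n}) (a : 'I_n) (k : 'I_n.+1) : {perm 'I_n.+1} :=
  (tperm (lift k a) k * lift_perm k k q)%g.

Section Ins.
Variables (n : nat) (q : {perm 'I_n}) (a : 'I_n) (k : 'I_n.+1).
Local Notation q' := (ins q a k).
Local Notation j := #|porbit q a|.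

Lemma ins_a : q' (lift k a) = k.
Proof. by rewrite permM tpermL lift_perm_id. Qed.

Lemma ins_k : q' k = lift k (q a).
Proof. by rewrite permM tpermR lift_perm_lift. Qed.

Lemma ins_other x : x != a -> q' (lift k x) = lift k (q x).
Proof.
move=> Hx; rewrite permM tpermD ?lift_perm_lift //.
  by rewrite (inj_eq lift_inj) eq_sym.
exact: neq_lift.
Qed.

Lemma porbit_ins_out x : x \notin porbit q a ->
  porbit q' (lift k x) = lift k @: porbit q x.
Proof.
move=> Hx; apply: porbit_transfer => y Hy; apply: ins_other.
by apply: contraNneq Hx => E; rewrite porbit_sym -E.
Qed.

Lemma porbit_ins_k : porbit q' k = k |: lift k @: porbit q a.
Proof.
have Hne i : 0 < i < j -> (q ^+ i)%g a != a.
  move=> /andP[H0 Hi].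
  have U := uniq_traject_porbit q a.
  have Hj0 : 0 < j by apply: leq_ltn_trans Hi.
  have Hs : i < size (traject q a j) by rewrite size_traject.
  have H0s : 0 < size (traject q a j) by rewrite size_traject.
  have := nth_uniq a Hs H0s U.
  rewrite !nth_traject // /= => E.
  by rewrite permX E -lt0n H0.
have E i : i < j -> (q' ^+ i.+1)%g k = lift k ((q ^+ i.+1)%g a).
  elim: i => [|i IH] Hi; first by rewrite !expg1 ins_k.
  rewrite expgSr permM IH ?(ltnW Hi) // ins_other ?Hne ?Hi //.
  by rewrite -permM -expgSr.
apply/eqP; rewrite eqEsubset; apply/andP; split; last first.
  apply/subsetP => z /setU1P[->|/imsetP[y Hy ->]].
    exact: porbit_id.
  have : y \in traject q a j by rewrite -porbit_traject.
  case/trajectP => i Hi ->.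
  case: i Hi => [|i] Hi.
    have Hj : 0 < j by rewrite lt0n card_porbit_neq0.
    rewrite /= -{1}(iter_porbit q a) -(prednK Hj) -permX -E ?prednK ?leqnn //.
    exact: mem_porbit.
  by rewrite -permX -E ?(ltnW Hi) // mem_porbit.
apply/subsetP => z Hz; case: (unliftP k z) Hz => [x ->|->]; last first.
  by rewrite setU11.
move=> Hz; apply/setU1P; right.
case: (boolP (x \in porbit q a)) => Hx; first by rewrite imset_f.
exfalso; move: Hz; rewrite -eq_porbit_mem => /eqP E'.
by move: (porbit_id q' k); rewrite -E' porbit_ins_out // (negbTE (k_notin_lift _ _)).
Qed.

Lemma card_porbit_ins_k : #|porbit q' k| = j.+1.
Proof. by rewrite porbit_ins_k cardsU1 k_notin_lift card_imset //; apply: lift_inj. Qed.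

Lemma card_porbit_ins x :
  #|porbit q' (lift k x)| = #|porbit q x| + (x \in porbit q a).
Proof.
case: (boolP (x \in porbit q a)) => Hx; last by rewrite porbit_ins_out // card_imset ?addn0 //; apply: lift_inj.
have : lift k x \in porbit q' k by rewrite porbit_ins_k inE imset_f ?orbT.
rewrite -eq_porbit_mem => /eqP ->; rewrite card_porbit_ins_k addn1.
by move: Hx; rewrite -eq_porbit_mem => /eqP ->.
Qed.

Lemma porbits_ins : #|porbits q'| = #|porbits q|.
Proof.
have := porbits_mul_tperm (lift_perm k k q) (lift k a) k.
rewrite porbit_lift_k inE eq_sym neq_lift porbits_lift /= => H.
by rewrite /ins; move: H; rewrite addn1 -addn2 => /eqP; rewrite eqn_add2r => /eqP.
Qed.

Lemma ncycles_ins m : 0 < m ->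
  ncycles q' m = ncycles q m - (m == j) + (m == j.+1).
Proof.
move=> Hm.
have Hj : 0 < j by rewrite lt0n card_porbit_neq0.
have E1 := ncyclesE q' m.
rewrite (bigD1_ord k) // card_porbit_ins_k /= in E1.
rewrite (bigID (mem (porbit q a))) /= in E1.
have E2 := ncyclesE q m.
rewrite (bigID (mem (porbit q a))) /= in E2.
have S1 : \sum_(i < n | i \notin porbit q a) (#|porbit q' (lift k i)| == m)
   = \sum_(i < n | i \notin porbit q a) (#|porbit q i| == m).
  apply: eq_bigr => i Hi; rewrite card_porbit_ins.
  by move: Hi => /negbTE ->; rewrite addn0.
have S2 : \sum_(i in porbit q a) (#|porbit q' (lift k i)| == m) = j * (j.+1 == m).
  rewrite -sum_nat_const; apply: eq_bigr => i Hi.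
  rewrite card_porbit_ins Hi addn1.
  by move: Hi; rewrite -eq_porbit_mem => /eqP ->.
have S3 : \sum_(i in porbit q a) (#|porbit q i| == m) = j * (j == m).
  rewrite -sum_nat_const; apply: eq_bigr => i Hi.
  by move: Hi; rewrite -eq_porbit_mem => /eqP ->.
rewrite S1 S2 in E1; rewrite S3 in E2.
set R := \sum_(i < n | _) _ in E1 E2.
apply/eqP; rewrite -(eqn_pmul2l Hm); apply/eqP.
case: (eqVneq m j) => [Emj|Nmj].
  subst m; rewrite eqxx (eq_sym j) (gtn_eqF (ltnSn j)) /= muln0 add0n addn0 in E1 E2 *.
  by rewrite mulnBr E1 E2 addKn add0n.
case: (eqVneq m j.+1) => [Emj|Nmj1].
  subst m; rewrite eqxx /= muln1 addn1 in E1 *.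
  rewrite eq_sym (negbTE Nmj) muln0 add0n in E2.
  by rewrite subn0 mulnS E1 E2; lia.
rewrite !(eq_sym _ m) (negbTE Nmj) (negbTE Nmj1) /= in E1 E2 *.
by rewrite subn0 addn0 E1 E2 !muln0.
Qed.
End Ins.

Definition closedst (T : finType) (s t : {perm T}) (Y : {set T}) :=
  forall y, y \in Y -> (s y \in Y) && (t y \in Y).

Lemma perm_closed_eq (T : finType) (u : {perm T}) (Y : {set T}) :
  (forall y, y \in Y -> u y \in Y) -> forall z, (u z \in Y) = (z \in Y).
Proof.
move=> H.
have E : u @: Y = Y.
  apply/eqP; rewrite eqEcard card_imset ?leqnn ?andbT; last exact: perm_inj.
  by apply/subsetP => _ /imsetP[y Hy ->]; apply: H.
move=> z; apply/idP/idP => [Hz|/H //].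
by move: Hz; rewrite -{1}E mem_imset //; apply: perm_inj.
Qed.

Lemma transE (T : finType) (s t : {perm T}) :
  [transitive <<[set s; t]>>, on [set: T] | 'P] ->
  forall x (Y : {set T}), x \in Y -> closedst s t Y -> Y = setT.
Proof.
move=> Htr x Y xY cl.
have Ho := atransP Htr x (in_setT x).
apply/eqP; rewrite eqEsubset subsetT /= -Ho.
have sub : (<<[set s; t]>> \subset 'N(Y | 'P))%g.
  rewrite gen_subG; apply/subsetP => u /set2P[->|->];
    apply/astabsP => z /=; apply: perm_closed_eq => y Hy.
  - by case/andP: (cl y Hy).
  - by case/andP: (cl y Hy).
apply/subsetP => z /orbitP[u Hu <-].
by rewrite (astabs_act _ (subsetP sub u Hu)).
Qed.

Lemma transI (T : finType) (s t : {perm T}) (x : T) :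
  (forall Y : {set T}, x \in Y -> closedst s t Y -> Y = setT) ->
  [transitive <<[set s; t]>>, on [set: T] | 'P].
Proof.
move=> H; apply/imsetP; exists x => //; symmetry; apply: H.
  exact: orbit_refl.
move=> y /orbitP[u Hu <-].
have M v : v \in [set s; t] -> 'P%act ('P%act x u) v \in orbit 'P <<[set s; t]>>%g x.
  by move=> Hv; rewrite -actM; apply: mem_orbit; rewrite groupM // mem_gen.
by apply/andP; split; apply: M; rewrite !inE eqxx ?orbT.
Qed.

Section Conj.
Variables (T : finType) (pi : {perm T}).

Lemma porbit_conj (q : {perm T}) x : porbit (q ^ pi)%g (pi x) = pi @: porbit q x.
Proof. by apply: porbit_transfer => y _; rewrite permJ. Qed.

Lemma porbits_conj (q : {perm T}) : #|porbits (q ^ pi)%g| = #|porbits q|.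
Proof.
have -> : porbits (q ^ pi)%g = (fun C : {set T} => pi @: C) @: porbits q.
  apply/setP => C; apply/imsetP/imsetP => [[y _ ->]|[C' /imsetP[x _ ->] ->]].
    exists (porbit q (pi^-1 y)%g); first exact: imset_f.
    by rewrite -porbit_conj permKV.
  by exists (pi x) => //; rewrite porbit_conj.
by rewrite card_imset //; apply: imset_inj; apply: perm_inj.
Qed.

Lemma trans_conj (s t : {perm T}) :
  [transitive <<[set s; t]>>, on [set: T] | 'P] ->
  [transitive <<[set (s ^ pi)%g; (t ^ pi)%g]>>, on [set: T] | 'P].
Proof.
move=> Htr.
have [x _] : exists x : T, True.
  by case/imsetP: Htr => x _ _; exists x.
apply: (transI (x := x)) => Y xY cl.
have E : [set z | pi z \in Y] = setT.
  apply: (transE Htr (x := (pi^-1 x)%g)); first by rewrite inE permKV.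
  move=> y; rewrite !inE => Hy; case/andP: (cl _ Hy).
  by rewrite !permJ => -> ->.
apply/setP => z; rewrite inE.
by have := in_setT (pi^-1 z)%g; rewrite -E inE permKV.
Qed.
End Conj.

Lemma ncycles_conj n (q pi : {perm 'I_n}) m : 0 < m ->
  ncycles (q ^ pi)%g m = ncycles q m.
Proof.
move=> Hm; apply/eqP; rewrite -(eqn_pmul2l Hm) !ncyclesE.
rewrite (reindex_inj (@perm_inj _ pi)) /=.
apply/eqP; apply: eq_bigr => x _.
by rewrite porbit_conj card_imset //; apply: perm_inj.
Qed.

Definition good N g n (F : nat -> nat) (st : {perm 'I_n} * {perm 'I_n}) : bool :=
  [&& [transitive <<[set st.1; st.2]>>, on [set: 'I_n] | 'P], genus_is st.1 st.2 g &
      [forall m : 'I_N, (0 < m) ==> (ncycles (st.1 * st.2)%g m == F m)]].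

Definition W N g n F j := [set x : {perm 'I_n} * {perm 'I_n} * 'I_n |
   good N g F x.1 && (#|porbit (x.1.1 * x.1.2)%g x.2| == j)].

Definition stepf n (y : {perm 'I_n} * {perm 'I_n} * 'I_n * 'I_n.+1) :
   {perm 'I_n.+1} * {perm 'I_n.+1} * 'I_n.+1 :=
  ((ins y.1.1.1 y.1.2 y.2, lift_perm y.2 y.2 y.1.1.2), lift y.2 y.1.2).

Definition Fs (F : nat -> nat) j m := F m - (m == j) + (m == j.+1).

Lemma trans_step n (s t : {perm 'I_n}) a k :
  [transitive <<[set s; t]>>, on [set: 'I_n] | 'P] ->
  [transitive <<[set ins s a k; lift_perm k k t]>>, on [set: 'I_n.+1] | 'P].
Proof.
move=> Htr; apply: (transI (x := k)) => Y kY cl.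
set Y0 := [set z | lift k z \in Y].
have cl0 : closedst s t Y0.
  move=> z; rewrite !inE => Hz; apply/andP; split; last first.
    by rewrite -(lift_perm_lift k k t z); case/andP: (cl _ Hz).
  case: (eqVneq z a) => [->|Nz].
    by rewrite -ins_k; case/andP: (cl _ kY).
  by rewrite -(ins_other s k Nz); case/andP: (cl _ Hz).
have sa : s a \in Y0 by rewrite inE -ins_k; case/andP: (cl _ kY).
have E := transE Htr sa cl0.
apply/setP => y; rewrite inE; case: (unliftP k y) => [z ->|->] //.
by have := in_setT z; rewrite -E inE.
Qed.

Lemma ins_mul n (s t : {perm 'I_n}) a k :
  (ins s a k * lift_perm k k t)%g = ins (s * t)%g a k.
Proof. by rewrite /ins -mulgA lift_permM. Qed.

Lemma W_step N g n F j :
  #|W N g n F j| * n.+1 <= #|W N g n.+1 (Fs F j) j.+1|.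
Proof.
have Hinj : {in setX (W N g n F j) [set: 'I_n.+1] &, injective (@stepf n)}.
  move=> [[[s t] a] k] [[[s2 t2] a2] k2] _ _ E.
  have /= Es := congr1 (fun z => z.1.1) E.
  have /= Et := congr1 (fun z => z.1.2) E.
  have /= Ea := congr1 (fun z => z.2) E.
  have Ek : k = k2 by rewrite -(ins_a s a k) Es Ea ins_a.
  subst k2; have Ea2 := lift_inj Ea; subst a2.
  have Hl (u v : {perm 'I_n}) : lift_perm k k u = lift_perm k k v -> u = v.
    move=> Euv; apply/permP => x; apply: (@lift_inj _ k).
    by rewrite -(lift_perm_lift k k u) -(lift_perm_lift k k v) Euv.
  have -> := Hl _ _ Et.
  by move/mulgI: Es => /Hl ->.
have : #|@stepf n @: setX (W N g n F j) [set: 'I_n.+1]| = #|W N g n F j| * n.+1.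
  by rewrite (card_in_imset Hinj) cardsX cardsT card_ord.
move <-; apply: subset_leq_card; apply/subsetP => _ /imsetP[[[[s t] a] k] Hx ->].
move: Hx; rewrite !inE /= andbT => /andP[/and3P[Htr Hg /forallP Hf] /eqP Hj].
rewrite ins_mul card_porbit_ins porbit_id addn1 Hj eqxx andbT.
apply/and3P; split.
- exact: trans_step.
- move: Hg; rewrite /genus_is ins_mul !porbits_ins porbits_lift.
  by move/eqP => /= H; apply/eqP; lia.
- apply/forallP => m; apply/implyP => Hm.
  have := Hf m; rewrite Hm /= => /eqP Hfm.
  by rewrite /= ins_mul ncycles_ins // Hfm Hj.
Qed.

Lemma W_ext N g n F G j : (forall m, 0 < m -> F m = G m) ->
  W N g n F j = W N g n G j.
Proof.
move=> H; apply/setP => x; rewrite !inE /good.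
have -> : [forall m : 'I_N, (0 < m) ==> (ncycles (x.1.1 * x.1.2)%g m == F m)] =
          [forall m : 'I_N, (0 < m) ==> (ncycles (x.1.1 * x.1.2)%g m == G m)].
  by apply: eq_forallb => m; case: (boolP (0 < m)) => //= Hm; rewrite H.
by [].
Qed.

Definition Fi (F0 : nat -> nat) j0 i m := F0 m - (m == j0) + (m == j0 + i).

Lemma W_iter N g n1 F0 j0 i :
  #|W N g n1 (Fi F0 j0 0) j0| * (i + n1)`! <=
  #|W N g (i + n1) (Fi F0 j0 i) (j0 + i)| * n1`!.
Proof.
elim: i => [|i IH]; first by rewrite add0n addn0.
have E : (i.+1 + n1)`! = (i + n1).+1 * (i + n1)`! by rewrite addSn factS.
rewrite E mulnCA mulnC.
apply: leq_trans (leq_mul IH (leqnn (i + n1).+1)) _.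
rewrite mulnAC leq_mul2r; apply/orP; right.
have -> : W N g (i.+1 + n1) (Fi F0 j0 i.+1) (j0 + i.+1) =
          W N g (i + n1).+1 (Fs (Fi F0 j0 i) (j0 + i)) (j0 + i).+1.
  rewrite addnS; apply: W_ext => m _.
  by rewrite /Fs /Fi addnK addnS.
exact: W_step.
Qed.

Lemma card_dep (A B : finType) (S : {set A}) (P : A -> B -> bool) :
  #|[set x : A * B | (x.1 \in S) && P x.1 x.2]| = \sum_(a in S) \sum_b P a b.
Proof.
rewrite card_setE -(pair_bigA _ (fun a b => nat_of_bool ((a \in S) && P a b))) /= [RHS]big_mkcond; apply: eq_bigr => a _.
by case: (a \in S) => //=; rewrite big1.
Qed.

Lemma W_base N g n (S : {set {perm 'I_n} * {perm 'I_n}}) F j c :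
  (forall st, st \in S -> good N g F st) ->
  (forall st, st \in S -> ncycles (st.1 * st.2)%g j = c) ->
  #|S| * (j * c) <= #|W N g n F j|.
Proof.
move=> HS Hc.
have Hsub : [set x : {perm 'I_n} * {perm 'I_n} * 'I_n |
    (x.1 \in S) && (#|porbit (x.1.1 * x.1.2)%g x.2| == j)] \subset W N g n F j.
  apply/subsetP => x; rewrite !inE => /andP[Hx ->]; by rewrite HS.
apply: leq_trans (subset_leq_card Hsub).
rewrite (card_dep S (fun a b => #|porbit (a.1 * a.2)%g b| == j)).
rewrite -sum_nat_const; apply: eq_leq; apply: eq_bigr => st Hst.
by rewrite -ncyclesE Hc.
Qed.

Lemma W_end N g n F j (S : {set {perm 'I_n} * {perm 'I_n}}) :
  (forall st, good N g F st -> st \in S) ->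
  #|W N g n F j| <= #|S| * n.
Proof.
move=> H.
have Hsub : W N g n F j \subset setX S [set: 'I_n].
  by apply/subsetP => x; rewrite !inE => /andP[/H -> _].
by apply: leq_trans (subset_leq_card Hsub) _; rewrite cardsX cardsT card_ord.
Qed.

Definition cact (T : finType) (st : {perm T} * {perm T}) (pi : {perm T}) :=
  ((st.1 ^ pi)%g, (st.2 ^ pi)%g).

Lemma cact1 (T : finType) : (@cact T)^~ 1%g =1 id.
Proof. by move=> [s t]; rewrite /cact !conjg1. Qed.

Lemma cactM (T : finType) : forall x, act_morph (@cact T) x.
Proof. by move=> [s t] a b; rewrite /cact /= !conjgM. Qed.

Definition cactA (T : finType) := TotalAction (@cact1 T) (@cactM T).

Lemma dvd_count n (S : {set {perm 'I_n} * {perm 'I_n}}) :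
  (forall st pi, st \in S -> cact st pi \in S) ->
  (forall st, st \in S -> [transitive <<[set st.1; st.2]>>, on [set: 'I_n] | 'P]) ->
  n.-1`! %| #|S|.
Proof.
case: n S => [|n] S Hc Htr; first by rewrite dvd1n.
pose to := cactA 'I_n.+1.
pose H := [group of ('C_([set: {perm 'I_n.+1}])[ord0 | 'P])%g].
have cardH : #|H| = n`!.
  have := card_orbit_stab 'P [set: {perm 'I_n.+1}]%G ord0.
  have -> : orbit 'P [set: {perm 'I_n.+1}] ord0 = setT.
    apply/setP => y; rewrite inE; apply/orbitP; exists (tperm ord0 y); rewrite ?inE //=.
    exact: tpermL.
  rewrite cardsT card_ord cardsT card_Sn factS => /eqP; rewrite eqn_pmul2l // => /eqP.
  by [].
have Hacts : [acts H, on S | to].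
  apply/subsetP => pi _; apply/astabsP => st /=; apply/idP/idP => [Hst|/Hc //].
  have := Hc _ (pi^-1)%g Hst; rewrite /cact /= -!conjgM !mulgV !conjg1.
  by case: st {Hst}.
rewrite -(acts_sum_card_orbit Hacts); apply: dvdn_sum => O /imsetP[st Hst ->].
have Hstab : #|('C_H[st | to])%g| = 1.
  apply/eqP; rewrite eqn_leq cardG_gt0 andbT.
  apply: leq_trans (subset_leq_card (_ : _ \subset [set 1%g])) _; last by rewrite cards1.
  apply/subsetP => pi /setIP[/setIP[_ /astab1P Hp0] /astab1P Hfix].
  move: Hfix; case: st Hst => s t Hst [Es Et].
  have Hs : forall z, pi (s z) = s (pi z).
    by move=> z; rewrite -permJ Es.
  have Ht : forall z, pi (t z) = t (pi z).
    by move=> z; rewrite -permJ Et.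
  have E : [set z | pi z == z] = setT.
    apply: (transE (Htr _ Hst) (x := ord0)); first by rewrite inE; apply/eqP.
    move=> z; rewrite !inE /= => /eqP Hz.
    by rewrite Hs Ht Hz !eqxx.
  apply/set1P; apply/permP => z; rewrite perm1.
  by have := in_setT z; rewrite -E inE => /eqP.
have := card_orbit_stab to H st; rewrite Hstab muln1 => ->.
by rewrite cardH.
Qed.

Lemma bip_conj n g h (st : {perm 'I_n} * {perm 'I_n}) pi :
  is_bip_map g h st -> is_bip_map g h (cact st pi).
Proof.
case: st => s t /and3P[Htr Hf Hg]; apply/and3P; split => /=.
- exact: trans_conj.
- apply/forallP => k; apply/implyP => Hk.
  by rewrite -conjMg ncycles_conj //; move/forallP: Hf => /(_ k); rewrite Hk.
- by rewrite /genus_is -conjMg !porbits_conj.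
Qed.

Lemma good_ext N g n F G (st : {perm 'I_n} * {perm 'I_n}) :
  (forall m, 0 < m -> F m = G m) -> good N g F st = good N g G st.
Proof.
move=> H; rewrite /good.
have -> : [forall m : 'I_N, (0 < m) ==> (ncycles (st.1 * st.2)%g m == F m)] =
          [forall m : 'I_N, (0 < m) ==> (ncycles (st.1 * st.2)%g m == G m)].
  by apply: eq_forallb => m; case: (boolP (0 < m)) => //= Hm; rewrite H.
by [].
Qed.

Lemma nth_le_fsize (h : seq nat) i : i < size h -> i.+1 * nth 0 h i <= fsize h.
Proof.
by move=> Hi; rewrite /fsize (bigD1 (Ordinal Hi)) //= leq_addr.
Qed.

Lemma bip_good N g n h (st : {perm 'I_n} * {perm 'I_n}) :
  is_bip_map g h st -> good N g (fun m => nth 0 h m.-1) st.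
Proof.
case/and3P => Htr Hf Hg; apply/and3P; split => //.
apply/forallP => m; apply/implyP => Hm.
case: (leqP m (n + size h)) => Hle.
  have Hle' : m < (n + size h).+1 by rewrite ltnS.
  by move/forallP: Hf => /(_ (Ordinal Hle')) /=; rewrite Hm.
rewrite ncycles_big; last by apply: leq_ltn_trans Hle; apply: leq_addr.
rewrite nth_default //; rewrite -ltnS prednK //.
by apply: leq_ltn_trans Hle; apply: leq_addl.
Qed.

Lemma good_bip N g n h (st : {perm 'I_n} * {perm 'I_n}) :
  fsize h = n -> n < N ->
  good N g (fun m => nth 0 h m.-1) st -> is_bip_map g h st.
Proof.
move=> Hn HN /and3P[Htr Hg /forallP Hf]; apply/and3P; split => //.
apply/forallP => k; apply/implyP => Hk.
case: (ltnP k N) => HkN.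
  by move: (Hf (Ordinal HkN)); rewrite /= Hk.
rewrite ncycles_big; last by apply: leq_trans HN HkN.
case: (ltnP k.-1 (size h)) => Hs; last by rewrite nth_default.
have := nth_le_fsize Hs; rewrite prednK // Hn.
case E: (nth 0 h k.-1) => [//|x] H.
have : k <= n by apply: leq_trans H; rewrite leq_pmulr.
by rewrite leqNgt (leq_trans HN HkN).
Qed.

Lemma fminus1_nth f p i : 0 < nth 0 f p.-1 -> 0 < p ->
  nth 0 (map absz (fminus1 f p)) i = nth 0 f i - (i.+1 == p).
Proof.
move=> Hfp Hp.
have Hb : (i.+1 == p) <= nth 0 f i.
  by case: eqVneq => // E; rewrite -E in Hfp.
case: (ltnP i (maxn (size f) p)) => Hi.
  rewrite (nth_map 0%R); last by rewrite size_map size_iota.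
  rewrite (nth_map 0); last by rewrite size_iota.
  by rewrite nth_iota // add0n subzn.
rewrite !nth_default //; first by apply: leq_trans Hi; apply: leq_maxl.
by rewrite size_map /fminus1 size_map size_iota.
Qed.

Lemma fminus1_all f p : 0 < p ->
  all (fun x : int => (0 <= x)%R) (fminus1 f p) -> 0 < nth 0 f p.-1.
Proof.
move=> Hp /allP H.
have Hm : p.-1 < maxn (size f) p.
  by rewrite (leq_trans _ (leq_maxr _ _)) // prednK.
have Hi : p.-1 < size (fminus1 f p) by rewrite /fminus1 size_map size_iota.
have := H _ (mem_nth 0%R Hi).
rewrite /fminus1 (nth_map 0); last by rewrite size_iota.
rewrite nth_iota // add0n prednK // eqxx subr_ge0 lez_nat //.
Qed.

Lemma fminus1_allI f p : 0 < p -> 0 < nth 0 f p.-1 ->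
  all (fun x : int => (0 <= x)%R) (fminus1 f p).
Proof.
move=> Hp Hfp; apply/allP => x /mapP[i _ ->]; rewrite subr_ge0 lez_nat.
by case: eqVneq => // E; rewrite -E in Hfp.
Qed.

Lemma size_lt_of_nth f p : 0 < p -> 0 < nth 0 f p.-1 -> p.-1 < size f.
Proof.
move=> Hp Hfp; rewrite ltnNge; apply: contraTN Hfp => H.
by rewrite nth_default.
Qed.

Lemma fsize_minus f p : 0 < p -> 0 < nth 0 f p.-1 ->
  fsize (map absz (fminus1 f p)) + p = fsize f.
Proof.
move=> Hp Hfp.
have Hsz := size_lt_of_nth Hp Hfp.
have Es : size (map absz (fminus1 f p)) = size f.
  rewrite size_map /fminus1 size_map size_iota; apply/maxn_idPl.
  by rewrite -(prednK Hp).
rewrite /fsize Es.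
rewrite (bigD1 (Ordinal Hsz)) //= [X in _ = X](bigD1 (Ordinal Hsz)) //=.
rewrite fminus1_nth // prednK // eqxx.
have -> : \sum_(i < size f | i != Ordinal Hsz) i.+1 * nth 0 (map absz (fminus1 f p)) i
        = \sum_(i < size f | i != Ordinal Hsz) i.+1 * nth 0 f i.
  apply: eq_bigr => i Hi; rewrite fminus1_nth //.
  have -> : (i.+1 == p) = false.
    apply/negbTE; apply: contra Hi => /eqP E; apply/eqP/val_inj.
    by rewrite /= -E.
  by rewrite subn0.
set R := \sum_(i < size f | _) _.
set a := nth 0 f p.-1.
have : 0 < a by [].
move: a => a Ha; nia.
Qed.

Lemma fact_pred n : 0 < n -> n`! = n * n.-1`!.
Proof. by case: n => // n _; rewrite factS. Qed.

Lemma final_arith a LA LB n1 n2 Fz : 0 < n1 -> 0 < n2 -> n1 <= Fz ->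
  n2.-1`! %| LB -> a * LA * n2`! <= n2 * LB * n1`! ->
  a * (LA %/ n1.-1`!) <= Fz * (LB %/ n2.-1`!).
Proof.
move=> H1 H2 Hle Hd H.
rewrite (fact_pred H1) (fact_pred H2) in H.
have EB : LB = LB %/ n2.-1`! * n2.-1`! by rewrite divnK.
have HA : LA %/ n1.-1`! * n1.-1`! <= LA by apply: leq_divM.
move: EB HA H; set bA := LA %/ _; set bB := LB %/ _; set c1 := n1.-1`!; set c2 := n2.-1`!.
move=> EB HA H.
apply: (@leq_trans (n1 * bB)); last by apply: leq_mul.
have Hc : 0 < c1 * (n2 * c2) by rewrite !muln_gt0 H2 !fact_gt0.
rewrite -(leq_pmul2r Hc).
apply: (@leq_trans (a * LA * (n2 * c2))).
  have -> : a * bA * (c1 * (n2 * c2)) = a * (bA * c1) * (n2 * c2) by rewrite !mulnA.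
  by apply: leq_mul => //; apply: leq_mul.
apply: leq_trans H _; apply: eq_leq; rewrite EB; lia.
Qed.

Lemma key_ineq f g p j0 (Hj0 : 0 < j0) (Hp : j0 < p)
  (Hfj : 0 < nth 0 f j0.-1) (Hfp : 0 < nth 0 f p.-1) :
  let hA := map absz (fminus1 f p) in
  let hB := map absz (fminus1 f j0) in
  let n1 := fsize hA in
  let d := p - j0 in
  fsize hB = d + n1 ->
  j0 * nth 0 f j0.-1 * labelled_count n1 g hA * (d + n1)`! <=
  (d + n1) * labelled_count (d + n1) g hB * n1`!.
Proof.
move=> hA hB n1 d En2.
have Hp0 : 0 < p by apply: leq_trans Hp.
have Npj : (j0 == p) = false by rewrite ltn_eqF.
have Ejd : j0 + d = p by rewrite subnKC // ltnW.
set N := (d + n1).+1.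
pose F0 := fun m => nth 0 hA m.-1.
have F0j : F0 j0 = nth 0 f j0.-1.
  by rewrite /F0 /hA fminus1_nth // prednK // Npj subn0.
have Hj0n1 : j0 <= n1.
  have Hpos : 0 < nth 0 hA j0.-1 by rewrite -/(F0 j0) F0j.
  have := nth_le_fsize (size_lt_of_nth Hj0 Hpos); rewrite prednK //.
  by apply: leq_trans; rewrite leq_pmulr.
have HjN : j0 < N by rewrite /N ltnS (leq_trans Hj0n1) // leq_addl.
have base := @W_base N g n1 [set st : {perm 'I_n1} * {perm 'I_n1} | is_bip_map g hA st] F0 j0 (nth 0 f j0.-1).
have {}base : #|[set st : {perm 'I_n1} * {perm 'I_n1} | is_bip_map g hA st]| * (j0 * nth 0 f j0.-1) <=
                   #|W N g n1 F0 j0|.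
  apply: base => st; rewrite inE => /(bip_good N) //.
  case/and3P => _ _ /forallP /(_ (Ordinal HjN)) /=; rewrite Hj0 /= => /eqP ->.
  exact: F0j.
have it := W_iter N g n1 F0 j0 d.
have ext0 : W N g n1 (Fi F0 j0 0) j0 = W N g n1 F0 j0.
  apply: W_ext => m _; rewrite /Fi addn0.
  case: eqVneq => [->|]; last by rewrite subn0 addn0.
  by rewrite subnK // F0j.
rewrite ext0 in it.
have en := @W_end N g (d + n1) (Fi F0 j0 d) (j0 + d) [set st : {perm 'I_(d + n1)} * {perm 'I_(d + n1)} | is_bip_map g hB st].
have {}en : #|W N g (d + n1) (Fi F0 j0 d) (j0 + d)| <=
               #|[set st : {perm 'I_(d + n1)} * {perm 'I_(d + n1)} | is_bip_map g hB st]| * (d + n1).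
  apply: en => st Hst; rewrite inE; apply: (good_bip (N := N)) => //.
  rewrite -(good_ext _ _ (F := Fi F0 j0 d)) // => m Hm.
  rewrite /Fi /F0 /hA /hB Ejd !fminus1_nth // !prednK //.
  case: (eqVneq m p) => [Emp|Nmp].
    subst m; rewrite eq_sym Npj /=; lia.
  case: (eqVneq m j0) => [Emj|Nmj] /=.
    subst m; lia.
  lia.
rewrite /labelled_count.
apply: (@leq_trans (#|W N g n1 F0 j0| * (d + n1)`!)).
  by rewrite leq_mul2r (mulnC (j0 * _)) base orbT.
apply: leq_trans it _.
by rewrite leq_mul2r (mulnC (d + n1)) en orbT.
Qed.

Lemma part1 (f : seq nat) (g p j0 : nat) (Hj0 : (1 <= j0)%N) (Hp : (j0 <= p)%N) :
  (j0 * fdeg f j0 * beta g (fminus1 f p) <= fsize f * beta g (fminus1 f j0))%N.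
Proof.
have Hp0 : 0 < p by apply: leq_trans Hp.
case: (posnP (fdeg f j0)) => Hfj; first by rewrite Hfj muln0 mul0n.
rewrite /beta; case: ifP => HA; last by rewrite muln0.
have Hfp := fminus1_all Hp0 HA.
rewrite /fdeg in Hfj *.
rewrite (fminus1_allI Hj0 Hfj).
case: (eqVneq p j0) => [Epj|Npj].
  subst p; rewrite leq_mul2r; apply/orP; right.
  by have := nth_le_fsize (size_lt_of_nth Hj0 Hfj); rewrite prednK.
have Hlt : j0 < p by rewrite ltn_neqAle eq_sym Npj Hp.
have EA := fsize_minus Hp0 Hfp.
have EB := fsize_minus Hj0 Hfj.
have En2 : fsize (map absz (fminus1 f j0)) = p - j0 + fsize (map absz (fminus1 f p)).
  by move: EA EB; lia.
have K := key_ineq g Hj0 Hlt Hfj Hfp En2.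
rewrite /beta_nat /= En2.
move: K; set n1 := fsize _; set d := p - j0 => K.
case: (posnP n1) => Hn1; first by rewrite Hn1 /= muln0.
have Hn2 : 0 < d + n1 by rewrite addn_gt0 Hn1 orbT.
rewrite ?(negbTE (lt0n_neq0 Hn1)) ?(negbTE (lt0n_neq0 Hn2)).
apply: final_arith => //.
  by rewrite -EA leq_addr.
rewrite /labelled_count; apply: dvd_count.
  by move=> st pi; rewrite !inE; apply: bip_conj.
by move=> st; rewrite inE => /and3P[].
Qed.

Theorem lemma20 (f : seq nat) (g p j0 : nat) (Hj0 : (1 <= j0)%N) (Hp : (j0 <= p)%N) :
  (j0 * fdeg f j0 * beta g (fminus1 f p) <= fsize f * beta g (fminus1 f j0))%N /\
  (forall (R : realFieldType) (delta : R), (0 < delta)%R ->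
     (delta * (fsize f)%:R <= (j0 * fdeg f j0)%:R)%R ->
     (delta * (beta g (fminus1 f p))%:R <= (beta g (fminus1 f j0))%:R)%R).
Proof.
have P1 := part1 f g Hj0 Hp.
split => // R delta Hd Hdf.
have Hp0 : 0 < p by apply: leq_trans Hp.
case: (posnP (beta g (fminus1 f p))) => HbA.
  by rewrite HbA mulr0 ler0n.
have Hfs : 0 < fsize f.
  move: HbA; rewrite /beta; case: ifP => // HA _.
  have Hfp := fminus1_all Hp0 HA.
  have := nth_le_fsize (size_lt_of_nth Hp0 Hfp); rewrite prednK //.
  by apply: leq_trans; rewrite muln_gt0 Hp0.
have X : ((j0 * fdeg f j0 * beta g (fminus1 f p))%:R <=
          (fsize f * beta g (fminus1 f j0))%:R :> R)%R by rewrite ler_nat.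
rewrite !natrM in X.
have Y : ((fsize f)%:R * (delta * (beta g (fminus1 f p))%:R) <=
          (fsize f)%:R * (beta g (fminus1 f j0))%:R :> R)%R.
  apply: le_trans X; rewrite mulrA (mulrC _ delta) -natrM.
  by apply: ler_wpM2r => //; rewrite ler0n.
by rewrite ler_pM2l ?ltr0n in Y.
Qed.
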